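(* Let $S(z)$ be a Rosenbrock system matrix and $\lambda\in\mathbb{C}$ with $S(\lambda)$ invertible. (i) If $\eta^{\mathbb{S}}(\lambda,B)<\infty$, then $\eta^{\mathbb{S}}(\lambda,B)=1/\sigma_{\max}\big([0_{n,r}\ I_n]\,S(\lambda)^{-1}[I_r\ 0_{r,n}]^T\big)$. (ii) If $\eta^{\mathbb{S}}(\lambda,C)<\infty$, then $\eta^{\mathbb{S}}(\lambda,C)=1/\sigma_{\max}\big([I_r\ 0_{r,n}]\,S(\lambda)^{-1}[0_{n,r}\ I_n]^T\big)$. (iii) If $\eta^{\mathbb{S}}(\lambda,P)<\infty$, let $J_1:=\operatorname{diag}\Big(\begin{bmatrix}0_{r,n}\\ I_n\end{bmatrix},\tilde J_1\Big)\in\mathbb{C}^{(d+1)(r+n),(d+1)n}$ and $J_2:=\begin{bmatrix}[0_{n,r}\ I_n]\\ \tilde J_2\end{bmatrix}\in\mathbb{C}^{(d+1)n,r+n}$. Then $\eta^{\mathbb{S}}(\lambda,P)=(\mu_{\mathcal{S}}(M))^{-1}$, where $M:=J_2S(\lambda)^{-1}[I_{r+n}\ \lambda I_{r+n}\ \cdots\ \lambda^dI_{r+n}]J_1$ and $\mathcal{S}=\{\operatorname{diag}(\Delta_1,\ldots,\Delta_{d+1}) : \Delta_i\in\mathbb{C}^{n,n}\}$.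
   Context: A Rosenbrock system matrix is $S(z)=\begin{bmatrix}A-zI_r & B\\ C & P(z)\end{bmatrix}$ with $A\in\mathbb{C}^{r,r}$, $B\in\mathbb{C}^{r,n}$, $C\in\mathbb{C}^{n,r}$, $P(z)=\sum_{k=0}^d z^kA_k$, $A_k\in\mathbb{C}^{n,n}$. $\|\cdot\|$ is the spectral norm, $\sigma_{\max}$ the largest singular value, $0_{m,n}$ the $m\times n$ zero matrix. Backward errors with perturbation of one block only (with $\inf\emptyset=\infty$): $\eta^{\mathbb{S}}(\lambda,B):=\inf\{\|\Delta_B\| : \Delta_B\in\mathbb{C}^{r,n},\ \det(S(\lambda)-\begin{bmatrix}0&\Delta_B\\0&0\end{bmatrix})=0\}$; $\eta^{\mathbb{S}}(\lambda,C):=\inf\{\|\Delta_C\| : \Delta_C\in\mathbb{C}^{n,r},\ \det(S(\lambda)-\begin{bmatrix}0&0\\ \Delta_C&0\end{bmatrix})=0\}$; $\eta^{\mathbb{S}}(\lambda,P):=\inf\{\max_j\|\Delta_{A_j}\| : \Delta_{A_j}\in\mathbb{C}^{n,n},\ \det(S(\lambda)-\begin{bmatrix}0&0\\0&\sum_{j=0}^d\lambda^j\Delta_{A_j}\end{bmatrix})=0\}$. $\tilde J_1\in\mathbb{C}^{(r+n)d,\,nd}$ is the block-diagonal matrix with $d$ diagonal blocks each equal to $\begin{bmatrix}0_{r,n}\\ I_n\end{bmatrix}$; $\tilde J_2\in\mathbb{C}^{nd,\,r+n}$ is the vertical stack of $d$ copies of $[0_{n,r}\ I_n]$. Structured $\mu$-value: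 for $M\in\mathbb{C}^{k,p}$ and $\mathcal{S}\subseteq\mathbb{C}^{p,k}$, $\mu_{\mathcal{S}}(M):=\big(\inf\{\|\Delta\| : \Delta\in\mathcal{S},\ \det(I_p-\Delta M)=0\}\big)^{-1}$, with $\mu_{\mathcal S}(M)=0$ if no such $\Delta$ exists. *)

(* Defs.v *)
From HB Require Import structures.
From mathcomp Require Import all_boot all_order all_algebra.
From mathcomp Require Import classical_sets boolp reals constructive_ereal ereal.
From mathcomp Require Import complex.
Set Implicit Arguments.
Unset Strict Implicit.
Unset Printing Implicit Defensive.
Import Order.TTheory GRing.Theory Num.Theory.
Local Open Scope ring_scope.
Local Open Scope classical_set_scope.

Section Defs.
Variable R : realType.
Local Notation C := R[i].

Definition vnorm m (x : 'cV[C]_m) : R :=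
  Num.sqrt (\sum_(i < m) (complex.Re (x i 0) ^+ 2 + complex.Im (x i 0) ^+ 2)).

Definition specnorm m p (X : 'M[C]_(m, p)) : R :=
  sup [set vnorm (X *m x) | x in [set x : 'cV[C]_p | vnorm x <= 1]].

Definition ctrmx m p (X : 'M[C]_(m, p)) : 'M[C]_(p, m) :=
  map_mx (@conjc R) X^T.

(* largest singular value: square root of the largest eigenvalue of X^* X
   (these eigenvalues are real and nonnegative) *)
Definition sigma_max m p (X : 'M[C]_(m, p)) : R :=
  sup [set Num.sqrt (complex.Re a) | a in [set a : C | eigenvalue (ctrmx X *m X) a]].

(* Rosenbrock system matrix S(z) with P(z) = \sum_{k=0}^d z^k A_k *)
Definition rosenbrock r n d (A : 'M[C]_r) (B : 'M[C]_(r, n))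
  (Cm : 'M[C]_(n, r)) (Ak : 'I_d.+1 -> 'M[C]_n) (z : C) : 'M[C]_(r + n) :=
  block_mx (A - z%:M) B Cm (\sum_(k < d.+1) z ^+ k *: Ak k).

(* backward errors, perturbing one block only (inf of the empty set = +oo) *)
Definition etaB r n (S : 'M[C]_(r + n)) : \bar R :=
  ereal_inf [set (specnorm DB)%:E | DB in
    [set DB : 'M[C]_(r, n) |
      \det (S - block_mx (0 : 'M[C]_(r, r)) DB (0 : 'M[C]_(n, r)) (0 : 'M[C]_n)) = 0]].

Definition etaC r n (S : 'M[C]_(r + n)) : \bar R :=
  ereal_inf [set (specnorm DC)%:E | DC in
    [set DC : 'M[C]_(n, r) |
      \det (S - block_mx (0 : 'M[C]_(r, r)) (0 : 'M[C]_(r, n)) DC (0 : 'M[C]_n)) = 0]].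

Definition etaP r n d (S : 'M[C]_(r + n)) (lam : C) : \bar R :=
  ereal_inf [set (\big[Num.max/0]_(j < d.+1) specnorm (DA j))%:E | DA in
    [set DA : 'I_d.+1 -> 'M[C]_n |
      \det (S - block_mx (0 : 'M[C]_(r, r)) (0 : 'M[C]_(r, n)) (0 : 'M[C]_(n, r))
                  (\sum_(j < d.+1) lam ^+ j *: DA j)) = 0]].

(* structured mu-value; mu = 0 if no admissible Delta exists *)
Definition mu_value k p (SS : set 'M[C]_(p, k)) (M : 'M[C]_(k, p)) : R :=
  let D := [set Dl : 'M[C]_(p, k) | SS Dl /\ \det (1%:M - Dl *m M) = 0] in
  if `[< D = set0 >] then 0
  else (fine (ereal_inf [set (specnorm Dl)%:E | Dl in D]))^-1.

End Defs.

(* Main.v *)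
Require Import Defs.
From HB Require Import structures.
From mathcomp Require Import all_boot all_order all_algebra.
From mathcomp Require Import classical_sets boolp reals constructive_ereal ereal.
From mathcomp Require Import complex.
From mathcomp Require Import ring.
Import Order.TTheory GRing.Theory Num.Theory.
Local Open Scope ring_scope.
Local Open Scope classical_set_scope.

Set Implicit Arguments.
Unset Strict Implicit.
Unset Printing Implicit Defensive.

Section P1.
Local Open Scope complex_scope.
Variable R : realType.
Local Notation C := R[i].

Lemma ctrmxE m p (X : 'M[C]_(m,p)) i j : ctrmx X i j = (X j i)^*%C.
Proof. by rewrite /ctrmx !mxE. Qed.

Lemma ctrmx_mul m p q (X : 'M[C]_(m,p)) (Y : 'M[C]_(p,q)) :
  ctrmx (X *m Y) = ctrmx Y *m ctrmx X.
Proof. by rewrite /ctrmx trmx_mul map_mxM. Qed.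

Lemma ctrmxK m p (X : 'M[C]_(m,p)) : ctrmx (ctrmx X) = X.
Proof. by apply/matrixP => i j; rewrite !ctrmxE conjcK. Qed.

Lemma ctrmxZ m p c (X : 'M[C]_(m,p)) : ctrmx (c *: X) = c^*%C *: ctrmx X.
Proof. by apply/matrixP => i j; rewrite !(ctrmxE, mxE) rmorphM. Qed.

Lemma ctrmxD m p (X Y : 'M[C]_(m,p)) : ctrmx (X + Y) = ctrmx X + ctrmx Y.
Proof. by apply/matrixP => i j; rewrite !(ctrmxE, mxE) rmorphD. Qed.

Lemma ctrmxN m p (X : 'M[C]_(m,p)) : ctrmx (- X) = - ctrmx X.
Proof. by apply/matrixP => i j; rewrite !(ctrmxE, mxE) rmorphN. Qed.

Lemma ctrmx1 m : ctrmx (1%:M : 'M[C]_m) = 1%:M.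
Proof. by rewrite /ctrmx trmx1 map_mx1. Qed.

Lemma ctrmx0 m p : ctrmx (0 : 'M[C]_(m,p)) = 0.
Proof. by apply/matrixP => i j; rewrite !(ctrmxE, mxE) conjc0. Qed.

Definition nrm2 m (x : 'cV[C]_m) : C := (ctrmx x *m x) 0 0.

Lemma nrm2E m (x : 'cV[C]_m) : nrm2 x = \sum_i `|x i 0| ^+ 2.
Proof.
rewrite /nrm2 mxE; apply: eq_bigr => i _.
by rewrite ctrmxE sqr_normc mulrC.
Qed.

Lemma nrm2_ge0 m (x : 'cV[C]_m) : 0 <= nrm2 x.
Proof. by rewrite nrm2E sumr_ge0 // => i _; rewrite exprn_ge0. Qed.

Lemma vnorm_ge0 m (x : 'cV[C]_m) : 0 <= vnorm x.
Proof. exact: sqrtr_ge0. Qed.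

Lemma vnorm_nrm2 m (x : 'cV[C]_m) : ((vnorm x) ^+ 2)%:C = nrm2 x.
Proof.
rewrite /vnorm sqr_sqrtr; last by rewrite sumr_ge0 // => i _; rewrite addr_ge0 ?sqr_ge0.
rewrite nrm2E rmorph_sum; apply: eq_bigr => i _. 
exact: add_Re2_Im2.
Qed.

Lemma nrm2_eq0 m (x : 'cV[C]_m) : nrm2 x = 0 -> x = 0.
Proof.
rewrite nrm2E => /eqP; rewrite psumr_eq0; last by move=> i _; rewrite exprn_ge0.
move=> /allP H; apply/matrixP => i j; rewrite ord1 mxE.
have := H i (mem_index_enum _); rewrite /= sqrf_eq0 normr_eq0 => /eqP ->//.
Qed.

Lemma vnorm_eq0 m (x : 'cV[C]_m) : vnorm x = 0 -> x = 0.
Proof. by move=> h; apply: nrm2_eq0; rewrite -vnorm_nrm2 h expr0n. Qed.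

Lemma nrm2Z m c (x : 'cV[C]_m) : nrm2 (c *: x) = `|c| ^+ 2 * nrm2 x.
Proof.
rewrite !nrm2E mulr_sumr; apply: eq_bigr => i _.
by rewrite mxE normrM exprMn.
Qed.

Lemma vnorm_leP m (x : 'cV[C]_m) (c : R) : 0 <= c ->
  (vnorm x <= c) = (nrm2 x <= (c ^+ 2)%:C).
Proof.
move=> c0; rewrite -vnorm_nrm2 lecR.
by rewrite ler_pXn2r // ?nnegrE ?vnorm_ge0.
Qed.

Lemma vnorm_eqP m (x : 'cV[C]_m) (c : R) : 0 <= c ->
  (vnorm x = c) <-> (nrm2 x = (c ^+ 2)%:C).
Proof.
move=> c0; rewrite -vnorm_nrm2; split=> [->//|/complexI /eqP].
by rewrite eqrXn2 ?vnorm_ge0 // => /eqP.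
Qed.

Lemma nrm2_real m (x : 'cV[C]_m) : nrm2 x = (complex.Re (nrm2 x))%:C.
Proof. by rewrite -vnorm_nrm2. Qed.

End P1.


Section P2.
Local Open Scope complex_scope.
Variable R : realType.
Local Notation C := R[i].

Lemma nrm2Zr m (t : R) (x : 'cV[C]_m) : nrm2 (t%:C *: x) = (t ^+ 2)%:C * nrm2 x.
Proof. by rewrite nrm2Z sqr_normc conjc_real rmorphXn expr2. Qed.

Lemma vnormZr m (t : R) (x : 'cV[C]_m) : vnorm (t%:C *: x) = `|t| * vnorm x.
Proof.
apply/vnorm_eqP; first by rewrite mulr_ge0 ?vnorm_ge0.
by rewrite nrm2Zr -vnorm_nrm2 -rmorphM /= exprMn real_normK ?num_real.
Qed.

Lemma vnorm0 m : vnorm (0 : 'cV[C]_m) = 0.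
Proof. by apply/vnorm_eqP => //; rewrite nrm2E big1 ?expr0n // => i _; rewrite mxE normr0 expr0n. Qed.

Lemma nrm2_unitary m (P : 'M[C]_m) (y : 'cV[C]_m) :
  ctrmx P *m P = 1%:M -> nrm2 (P *m y) = nrm2 y.
Proof. by move=> hP; rewrite /nrm2 ctrmx_mul mulmxA -(mulmxA _ _ P) hP mulmx1. Qed.

Lemma quadE m p (G : 'M[C]_(m, p)) (y : 'cV[C]_p) :
  (ctrmx y *m (ctrmx G *m G) *m y) 0 0 = nrm2 (G *m y).
Proof. by rewrite /nrm2 ctrmx_mul !mulmxA. Qed.

Lemma nrm2_delta p (i : 'I_p) : nrm2 (delta_mx i 0 : 'cV[C]_p) = 1.
Proof.
rewrite nrm2E (bigD1 i) //= big1 ?addr0.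
  by rewrite mxE !eqxx /= normr1 expr1n.
by move=> j /negPf hj; rewrite mxE hj /= normr0 expr0n.
Qed.

Lemma sigma_max_spec m p (G : 'M[C]_(m, p)) :
  0 <= sigma_max G /\
  (forall y, vnorm (G *m y) <= sigma_max G * vnorm y) /\
  ((0 < p)%N -> exists v, vnorm v = 1 /\ vnorm (G *m v) = sigma_max G).
Proof.
case: p G => [|p] G.
  have -> : sigma_max G = 0.
    rewrite /sigma_max -[X in _ = X]sup0; congr sup.
    apply/seteqP; split=> x //= [a] ha _; exfalso; move: ha.
    by rewrite /eigenvalue /eigenspace; rewrite flatmx0 eqxx.
  split=> //; split=> // y; by rewrite flatmx0 mulmx0 vnorm0 mul0r.
set H := ctrmx G *m G.
have Hh : ctrmx H = H by rewrite /H ctrmx_mul ctrmxK.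
have Hn : H \is normalmx.
  by apply/normalmxP; change (H *m ctrmx H = ctrmx H *m H); rewrite Hh.
have /orthomx_spectralP HE := Hn.
have PUn := spectral_unitarymx H.
set P := spectralmx H in HE PUn; set D := spectral_diag H in HE.
have PU : P *m ctrmx P = 1%:M by apply/unitarymxP.
have PU' : ctrmx P *m P = 1%:M by apply: mulmx1C.
rewrite (invmx_unitary PUn) in HE.
change (H = ctrmx P *m diag_mx D *m P) in HE.
have quad : forall y, nrm2 (G *m y) = \sum_i D 0 i * `|(P *m y) i 0| ^+ 2.
  move=> y; rewrite -quadE -/H HE.
  have -> : ctrmx y *m (ctrmx P *m diag_mx D *m P) *m y =
            ctrmx (P *m y) *m diag_mx D *m (P *m y).
    by rewrite ctrmx_mul !mulmxA.
  set z := P *m y; rewrite mxE; apply: eq_bigr => i _.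
  rewrite mul_mx_diag mxE ctrmxE sqr_normc; ring.
pose vk (i : 'I_p.+1) := ctrmx P *m (delta_mx i 0 : 'cV[C]_p.+1).
have Pvk : forall i, P *m vk i = delta_mx i 0 by move=> i; rewrite mulmxA PU mul1mx.
have Dk : forall i, D 0 i = (vnorm (G *m vk i) ^+ 2)%:C.
  move=> i; rewrite vnorm_nrm2 quad Pvk (bigD1 i) //= big1 ?addr0.
    by rewrite mxE !eqxx /= normr1 expr1n mulr1.
  by move=> j /negPf hj; rewrite mxE hj /= normr0 expr0n mulr0.
pose F i := vnorm (G *m vk i).
have [k0 _ Hk0] := @arg_maxP _ R _ ord0 xpredT F isT.
set s0 := F k0.
have s0ge0 : 0 <= s0 by apply: vnorm_ge0.
have Dle : forall i, D 0 i <= (s0 ^+ 2)%:C.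
  move=> i; rewrite Dk lecR lerXn2r ?nnegrE ?vnorm_ge0 //; exact: Hk0.
have bound : forall y, nrm2 (G *m y) <= (s0 ^+ 2)%:C * nrm2 y.
  move=> y; rewrite quad -(nrm2_unitary y PU') nrm2E mulr_sumr.
  by apply: ler_sum => i _; rewrite ler_wpM2r ?exprn_ge0 ?normr_ge0.
have eig1 : eigenvalue H ((s0 ^+ 2)%:C).
  apply/eigenvalueP; exists (delta_mx 0 k0 *m P).
    rewrite HE !mulmxA -(mulmxA _ P) PU mulmx1.
    have -> : (delta_mx 0 k0 : 'rV[C]_p.+1) *m diag_mx D = D 0 k0 *: delta_mx 0 k0.
      apply/matrixP => i j; rewrite mul_mx_diag !mxE.
      rewrite ord1 eqxx /=; case: (eqVneq j k0) => [->|hj]; first by rewrite mulrC.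
      by rewrite mul0r mulr0.
    by rewrite -scalemxAl Dk.
  apply/eqP => h; have := congr1 (fun X => X *m ctrmx P) h.
  rewrite -mulmxA PU mulmx1 mul0mx => /matrixP /(_ 0 k0).
  by rewrite !mxE !eqxx /= => /eqP; rewrite oner_eq0.
have eig2 : forall a, eigenvalue H a -> complex.Re a <= s0 ^+ 2.
  move=> a /eigenvalueP [w hw wn0].
  set y := ctrmx w.
  have yE : nrm2 (G *m y) = a * nrm2 y.
    rewrite -quadE -/H /y ctrmxK hw -scalemxAl mxE /nrm2 ctrmxK.
    by [].
  have yn0 : nrm2 y != 0.
    apply/eqP => /nrm2_eq0 h; move: wn0; rewrite -(ctrmxK w) -/y h ctrmx0 eqxx //.
  have ypos : 0 < nrm2 y by rewrite lt_def yn0 nrm2_ge0.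
  have := bound y; rewrite yE ler_pM2r // lecE => /andP [_].
  by [].
have sig : sigma_max G = s0.
  rewrite /sigma_max; apply/le_anti/andP; split.
    apply: ge_sup.
      by exists s0; exists ((s0 ^+ 2)%:C) => //=; rewrite sqrtr_sqr ger0_norm.
    move=> x [a ha <-]; rewrite -(ger0_norm s0ge0) -sqrtr_sqr.
    by apply: ler_wsqrtr; apply: eig2.
  apply: ub_le_sup.
    exists s0 => x [a ha <-]; rewrite -(ger0_norm s0ge0) -sqrtr_sqr.
    by apply: ler_wsqrtr; apply: eig2.
  exists ((s0 ^+ 2)%:C) => //=.
  by rewrite sqrtr_sqr ger0_norm.
rewrite sig; split=> //; split.
  move=> y; rewrite vnorm_leP ?mulr_ge0 ?vnorm_ge0 //.
  by rewrite exprMn rmorphM /= (vnorm_nrm2 y); apply: bound.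
move=> _; exists (vk k0); split=> //.
apply/vnorm_eqP => //; rewrite -(nrm2_unitary _ PU') Pvk nrm2_delta.
by rewrite expr1n.
Qed.

End P2.


Section P3.
Local Open Scope complex_scope.
Variable R : realType.
Local Notation C := R[i].

Lemma vnorm0P m (x : 'cV[C]_m) : x = 0 -> vnorm x = 0.
Proof. by move=> ->; apply: vnorm0. Qed.

Section SN.
Variables (m p : nat) (X : 'M[C]_(m, p)).

Lemma sn_has_ub : has_ubound [set vnorm (X *m x) | x in [set x : 'cV[C]_p | vnorm x <= 1]].
Proof.
have [s0 [sb _]] := sigma_max_spec X.
exists (sigma_max X) => _ [x hx <-].
apply: le_trans (sb x) _; rewrite ler_piMr //.
Qed.

Lemma sn_ub (y : 'cV[C]_p) : vnorm y <= 1 -> vnorm (X *m y) <= specnorm X.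
Proof. by move=> hy; apply: (ub_le_sup sn_has_ub); exists y. Qed.

Lemma sn_ge0 : 0 <= specnorm X.
Proof.
have := sn_ub (y := 0); rewrite (vnorm0P (erefl (0 : 'cV[C]_p))) ler01 (vnorm0P (mulmx0 _ _)).
by apply.
Qed.

Lemma sn_bound (y : 'cV[C]_p) : vnorm (X *m y) <= specnorm X * vnorm y.
Proof.
have [y0|yn0] := eqVneq (vnorm y) 0.
  by rewrite y0 (vnorm_eq0 y0) (vnorm0P (mulmx0 _ _)) mulr0.
have ypos : 0 < vnorm y by rewrite lt_def yn0 vnorm_ge0.
have := sn_ub (y := ((vnorm y)^-1)%:C *: y).
rewrite vnormZr -scalemxAr vnormZr ger0_norm ?invr_ge0 ?vnorm_ge0 //.
rewrite mulVf // lexx => /(_ isT).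
by rewrite ler_pdivrMl // mulrC.
Qed.

Lemma sn_le (c : R) : (forall y : 'cV[C]_p, vnorm y <= 1 -> vnorm (X *m y) <= c) ->
  specnorm X <= c.
Proof.
move=> h; apply: ge_sup; first by exists (vnorm (X *m 0)), 0 => //=; rewrite (vnorm0P (x := 0)).

by move=> _ [y hy <-]; apply: h.
Qed.

End SN.

Lemma ctr_entry p (u y : 'cV[C]_p) : (ctrmx y *m u) 0 0 = ((ctrmx u *m y) 0 0)^*.
Proof. by rewrite -ctrmxE ctrmx_mul ctrmxK. Qed.

Lemma cauchy_schwarz p (u y : 'cV[C]_p) : nrm2 u = 1 ->
  `|(ctrmx u *m y) 0 0| ^+ 2 <= nrm2 y.
Proof.
move=> hu; set c := (ctrmx u *m y) 0 0.
have := nrm2_ge0 (y - c *: u).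
have -> : nrm2 (y - c *: u) = nrm2 y - c * c^*.
  have hb := ctr_entry u y; have hc : (ctrmx u *m y) 0 0 = c by [].
  move: hu; rewrite /nrm2 => he; rewrite -/c in hb; clearbody c.
  set Rhs := _ - _; rewrite ctrmxD ctrmxN ctrmxZ mulmxDl mulmxDr mulmxDr.
  rewrite -!scaleNr -!scalemxAl -!scalemxAr.
  rewrite !mxE; rewrite !mxE in hb hc he; rewrite hb hc he /Rhs; rewrite -[_ *: _]/(_ * _); ring.
by rewrite subr_ge0 sqr_normc.
Qed.

Lemma det0_vec m (A : 'M[C]_m) : \det A = 0 -> exists2 x : 'cV[C]_m, x != 0 & A *m x = 0.
Proof.
rewrite -det_tr => /eqP /det0P [w wn0 hw]; exists w^T.
  by apply: contra wn0 => /eqP h; rewrite -(trmxK w) h trmx0.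
by rewrite -(trmxK A) -trmx_mul hw trmx0.
Qed.

Lemma vec_det0 m (A : 'M[C]_m) (x : 'cV[C]_m) : x != 0 -> A *m x = 0 -> \det A = 0.
Proof.
move=> xn0 hx; apply/eqP; apply: contraR xn0 => hd.
have Au : A \in unitmx by rewrite unitmxE unitfE.
by rewrite -(mulKmx Au x) hx mulmx0.
Qed.

Lemma gen_eta m p (G : 'M[C]_(m, p)) :
  let T := [set (specnorm D)%:E | D in [set D : 'M[C]_(p, m) | \det (1%:M - G *m D) = 0]] in
  (ereal_inf T < +oo)%E -> ereal_inf T = ((sigma_max G)^-1)%:E.
Proof.
move=> T hT.
have [s0 [sb sa]] := sigma_max_spec G.
set s := sigma_max G in s0 sb sa *.
have LB : forall D : 'M[C]_(p, m), \det (1%:M - G *m D) = 0 -> 0 < s /\ s^-1 <= specnorm D.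
  move=> D /det0_vec [x xn0 hx].
  have xE : x = G *m (D *m x).
    by apply/eqP; rewrite mulmxA -subr_eq0 -{1}(mul1mx x) -mulmxBl hx.
  have xpos : 0 < vnorm x.
    rewrite lt_def vnorm_ge0 andbT; apply: contra xn0 => /eqP h.
    by rewrite (vnorm_eq0 h).
  have h1 : vnorm x <= s * (specnorm D * vnorm x).
    rewrite {1}xE; apply: le_trans (sb _) _; rewrite ler_wpM2l //; exact: sn_bound.
  rewrite mulrA -{1}(mul1r (vnorm x)) ler_pM2r // in h1.
  have spos : 0 < s.
    rewrite lt_def s0 andbT; apply/eqP => s00; move: h1; rewrite s00 mul0r.
    by rewrite ler10.
  by split=> //; rewrite -(ler_pM2l spos) mulfV ?gt_eqF.
have [_ [D1 hD1 _] _] : exists2 x, T x & (x < +oo)%E.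
  by apply: ereal_inf_lt.
have [spos _] := LB D1 hD1.
have pgt0 : (0 < p)%N.
  case: p G D1 hD1 {sb sa LB s s0 spos T hT} => // G D1.
  rewrite /= (_ : G *m D1 = 0) ?subr0 ?det1; last by apply/matrixP => i j; rewrite !mxE big_ord0.
  by move=> /eqP; rewrite oner_eq0.
have [v [v1 Gv]] := sa pgt0.
set u := (s^-1)%:C *: (G *m v).
have uE : u = (s^-1)%:C *: (G *m v) by [].
clearbody u.
have u1 : nrm2 u = 1.
  rewrite uE.
  rewrite nrm2Zr -vnorm_nrm2 Gv -rmorphM /= -exprMn mulVf ?gt_eqF //.
  by rewrite expr1n.
pose D0 := (s^-1)%:C *: (v *m ctrmx u).
have hD0 : \det (1%:M - G *m D0) = 0.
  apply: (@vec_det0 _ _ u).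
    apply/eqP => h; move: u1; rewrite h nrm2E big1; first by move=> /eqP; rewrite eq_sym oner_eq0.
    by move=> i _; rewrite mxE normr0 expr0n.
  have cu : ctrmx u *m u = 1%:M.
    by apply/matrixP => i j; rewrite !ord1 -[_ 0 0]/(nrm2 u) u1 mxE.
  rewrite mulmxBl mul1mx.
  have -> : G *m D0 *m u = u.
    by rewrite /D0 -scalemxAr -scalemxAl -!mulmxA cu mulmx1 -uE.
  by rewrite subrr.
have nD0 : specnorm D0 <= s^-1.
  apply: sn_le => y hy.
  rewrite vnorm_leP; last by rewrite invr_ge0 ltW.
  have -> : D0 *m y = ((s^-1)%:C * (ctrmx u *m y) 0 0) *: v.
    rewrite /D0 -scalemxAl -mulmxA.
    have -> : v *m (ctrmx u *m y) = (ctrmx u *m y) 0 0 *: v.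
      apply/matrixP => i j; rewrite !ord1 [LHS]mxE big_ord1 [RHS]mxE mulrC. by [].
    by rewrite scalerA.
  rewrite nrm2Z -vnorm_nrm2 v1 expr1n mulr1 normrM exprMn.
  rewrite -[X in _ <= X]mulr1 rmorphXn /=.
  apply: ler_pM.
  - by rewrite exprn_ge0.
  - by rewrite exprn_ge0.
  - by rewrite sqr_normc conjc_real -expr2.
  apply: le_trans (cauchy_schwarz y u1) _.
  by rewrite -vnorm_nrm2 -(expr1n _ 2) -rmorphXn lecR ler_pXn2r ?nnegrE ?vnorm_ge0.
apply/le_anti/andP; split.
  apply: ge_ereal_inf; exists (specnorm D0)%:E; first by exists D0.
  by rewrite lee_fin.
apply: le_ereal_inf_tmp => _ [D hD <-]; rewrite lee_fin.
by have [] := LB D hD.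
Qed.

End P3.


Section P4.
Local Open Scope complex_scope.
Variable R : realType.
Local Notation C := R[i].

Lemma syl_half a b (X : 'M[C]_(a, b)) (Y : 'M[C]_(b, a)) :
  \det (1%:M - X *m Y) == 0 -> \det (1%:M - Y *m X) == 0.
Proof.
move=> /det0P [w wn0 hw]; apply/det0P; exists (w *m X).
  apply: contra wn0 => /eqP h.
  have : w = w *m X *m Y by apply/eqP; rewrite -subr_eq0 -{1}(mulmx1 w) -mulmxA -mulmxBr hw.
  by move=> ->; rewrite h mul0mx.
have e : w = w *m X *m Y by apply/eqP; rewrite -subr_eq0 -{1}(mulmx1 w) -mulmxA -mulmxBr hw.
by rewrite mulmxBr mulmx1 mulmxA -e subrr.
Qed.

Lemma syl a b (X : 'M[C]_(a, b)) (Y : 'M[C]_(b, a)) :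
  (\det (1%:M - X *m Y) == 0) = (\det (1%:M - Y *m X) == 0).
Proof. by apply/idP/idP; apply: syl_half. Qed.

Lemma det_sub_unit N (S E : 'M[C]_N) : S \in unitmx ->
  (\det (S - E) == 0) = (\det (1%:M - invmx S *m E) == 0).
Proof.
move=> Su; have -> : S - E = S *m (1%:M - invmx S *m E).
  by rewrite mulmxBr mulmx1 mulmxA mulmxV // mul1mx.
rewrite det_mulmx mulf_eq0; have : \det S != 0 by rewrite -unitfE -unitmxE.
by move=> /negPf ->.
Qed.

Lemma detl N a b (S : 'M[C]_N) (U : 'M[C]_(N, a)) (D : 'M[C]_(a, b)) (V : 'M[C]_(b, N)) :
  S \in unitmx ->
  (\det (S - U *m D *m V) == 0) = (\det (1%:M - V *m invmx S *m U *m D) == 0).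
Proof.
move=> Su; rewrite det_sub_unit // !mulmxA (syl (invmx S *m U *m D) V).
by rewrite !mulmxA.
Qed.

Lemma ctrmx_mxcol k n (y : 'I_k -> 'cV[C]_n) :
  ctrmx (\mxcol_i y i) = \mxrow_i ctrmx (y i).
Proof. by apply/matrixP => a b; rewrite !(ctrmxE, mxE). Qed.

Lemma nrm2_mxcol k n (y : 'I_k -> 'cV[C]_n) : nrm2 (\mxcol_i y i) = \sum_i nrm2 (y i).
Proof. by rewrite /nrm2 ctrmx_mxcol mul_mxrow_mxcol summxE. Qed.

Lemma mxdiag_mul_mxcol k n q (Ds : 'I_k -> 'M[C]_n) (y : 'I_k -> 'M[C]_(n, q)) :
  \mxdiag_i Ds i *m \mxcol_i y i = \mxcol_i (Ds i *m y i).
Proof.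
rewrite /mxdiag mul_mxblock_mxrow; apply: eq_mxcol => i.
rewrite (bigD1 i) //= eqxx conform_mx_id big1 ?addr0 // => j.
by rewrite eq_sym => /negPf ->; rewrite mul0mx.
Qed.

Lemma nrm2_0 m : nrm2 (0 : 'cV[C]_m) = 0.
Proof. by rewrite /nrm2 mulmx0 mxE. Qed.

Lemma vnorm_mono m q (a : 'cV[C]_m) (b : 'cV[C]_q) : nrm2 a <= nrm2 b -> vnorm a <= vnorm b.
Proof. by move=> h; rewrite vnorm_leP ?vnorm_ge0 // vnorm_nrm2. Qed.

Lemma specnorm_mxdiag k n (Ds : 'I_k -> 'M[C]_n) :
  specnorm (\mxdiag_i Ds i) = \big[Num.max/0]_i specnorm (Ds i).
Proof.
set M := \big[Num.max/0]_i specnorm (Ds i).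
have M0 : 0 <= M.
  rewrite /M; elim/big_ind: _ => // [x y hx hy|i _]; last exact: sn_ge0.
  by rewrite le_max hx.
apply/le_anti/andP; split.
  apply: sn_le => x hx.
  rewrite -(submxcolK x) mxdiag_mul_mxcol vnorm_leP // nrm2_mxcol.
  apply: (@le_trans _ _ ((M ^+ 2)%:C * nrm2 x)).
    rewrite -(submxcolK x) nrm2_mxcol mulr_sumr; apply: ler_sum => i _.
    have h : vnorm (Ds i *m submxcol x i) <= M * vnorm (submxcol x i).
      apply: le_trans (sn_bound _ _) _; rewrite ler_wpM2r ?vnorm_ge0 //.
      exact: (le_bigmax _ (fun i => specnorm (Ds i)) i).
    move: h; rewrite vnorm_leP ?mulr_ge0 ?vnorm_ge0 //.
    by rewrite mxcolK exprMn rmorphM /= (vnorm_nrm2 (submxcol x i)).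
  rewrite -[X in _ <= X]mulr1 ler_wpM2l //; first by rewrite lecE /= eqxx exprn_ge0.
  by move: hx; rewrite vnorm_leP // expr1n.
apply/bigmax_leP; split; first exact: sn_ge0.
move=> j _; apply: sn_le => y hy.
pose x := \mxcol_i (if i == j then y else 0).
have nx : nrm2 x = nrm2 y.
  rewrite /x nrm2_mxcol (bigD1 j) //= eqxx big1 ?addr0 // => i.
  by move=> /negPf ->; rewrite nrm2_0.
have hx : vnorm x <= 1 by apply: le_trans hy; apply: vnorm_mono; rewrite nx.
apply: le_trans (sn_ub _ hx); apply: vnorm_mono.
rewrite /x mxdiag_mul_mxcol nrm2_mxcol (bigD1 j) //= eqxx lerDl.
by apply: sumr_ge0 => i _; apply: nrm2_ge0.
Qed.

End P4.


Unset Implicit Arguments.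
Set Strict Implicit.
Set Printing Implicit Defensive.

Lemma blockB (R : realType) r n (DB : 'M[R[i]]_(r, n)) :
  block_mx (0 : 'M[R[i]]_(r, r)) DB (0 : 'M[R[i]]_(n, r)) (0 : 'M[R[i]]_n) =
  (row_mx (1%:M : 'M[R[i]]_r) (0 : 'M[R[i]]_(r, n)))^T *m DB *m
  row_mx (0 : 'M[R[i]]_(n, r)) (1%:M : 'M[R[i]]_n).
Proof.
rewrite tr_row_mx trmx1 trmx0 mul_col_mx mul1mx mul0mx mul_col_row !mulmx0 !mulmx1.
by congr block_mx; apply/matrixP => i j; rewrite !mxE big1 // => k _; rewrite !mxE mul0r.
Qed.

Lemma blockC (R : realType) r n (DC : 'M[R[i]]_(n, r)) :
  block_mx (0 : 'M[R[i]]_(r, r)) (0 : 'M[R[i]]_(r, n)) DC (0 : 'M[R[i]]_n) =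
  (row_mx (0 : 'M[R[i]]_(n, r)) (1%:M : 'M[R[i]]_n))^T *m DC *m
  row_mx (1%:M : 'M[R[i]]_r) (0 : 'M[R[i]]_(r, n)).
Proof.
rewrite tr_row_mx trmx1 trmx0 mul_col_mx mul1mx mul0mx mul_col_row !mulmx0 !mulmx1.
by congr block_mx; apply/matrixP => i j; rewrite !mxE big1 // => k _; rewrite !mxE mul0r.
Qed.

Lemma blockP (R : realType) r n (W : 'M[R[i]]_n) :
  block_mx (0 : 'M[R[i]]_(r, r)) (0 : 'M[R[i]]_(r, n)) (0 : 'M[R[i]]_(n, r)) W =
  col_mx (0 : 'M[R[i]]_(r, n)) (1%:M : 'M[R[i]]_n) *m W *m
  row_mx (0 : 'M[R[i]]_(n, r)) (1%:M : 'M[R[i]]_n).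
Proof.
rewrite mul_col_mx mul1mx mul0mx mul_col_row !mulmx0 !mulmx1.
by congr block_mx; apply/matrixP => i j; rewrite !mxE big1 // => k _; rewrite !mxE mul0r.
Qed.

Theorem theorem2p3 (R : realType) (r n d : nat)
  (A : 'M[R[i]]_r) (B : 'M[R[i]]_(r, n)) (Cm : 'M[R[i]]_(n, r))
  (Ak : 'I_d.+1 -> 'M[R[i]]_n) (lam : R[i]) :
  let S := rosenbrock A B Cm Ak lam in
  S \in unitmx ->
  (* (i) *)
  ((etaB S < +oo)%E ->
     etaB S = ((sigma_max (row_mx (0 : 'M[R[i]]_(n, r)) (1%:M : 'M[R[i]]_n)
                  *m invmx S *m (row_mx (1%:M : 'M[R[i]]_r) (0 : 'M[R[i]]_(r, n)))^T))^-1)%:E)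
  /\
  (* (ii) *)
  ((etaC S < +oo)%E ->
     etaC S = ((sigma_max (row_mx (1%:M : 'M[R[i]]_r) (0 : 'M[R[i]]_(r, n))
                  *m invmx S *m (row_mx (0 : 'M[R[i]]_(n, r)) (1%:M : 'M[R[i]]_n))^T))^-1)%:E)
  /\
  (* (iii) *)
  ((etaP d S lam < +oo)%E ->
     let J1 : 'M[R[i]]_(\sum_(i < d.+1) (r + n), \sum_(j < d.+1) n) :=
       \mxblock_(i < d.+1, j < d.+1)
          (if i == j then col_mx (0 : 'M[R[i]]_(r, n)) (1%:M : 'M[R[i]]_n)
           else 0) in
     let J2 : 'M[R[i]]_(\sum_(i < d.+1) n, r + n) :=
       \mxcol_(i < d.+1) row_mx (0 : 'M[R[i]]_(n, r)) (1%:M : 'M[R[i]]_n) in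
     let Lam : 'M[R[i]]_(r + n, \sum_(j < d.+1) (r + n)) :=
       \mxrow_(j < d.+1) (lam ^+ j *: (1%:M : 'M[R[i]]_(r + n))) in
     let M := J2 *m invmx S *m Lam *m J1 in
     let SS : set 'M[R[i]]_(\sum_(i < d.+1) n) :=
       [set D | exists Ds : 'I_d.+1 -> 'M[R[i]]_n, D = \mxdiag_(i < d.+1) Ds i] in
     etaP d S lam = ((mu_value SS M)^-1)%:E).
Proof.
move=> S Su; split; [|split].
- set G := (X in sigma_max X) => hB.
  have E : [set DB : 'M[R[i]]_(r, n) | \det (S - block_mx (0 : 'M[R[i]]_(r, r)) DB
      (0 : 'M[R[i]]_(n, r)) (0 : 'M[R[i]]_n)) = 0] =
      [set DB | \det (1%:M - G *m DB) = 0].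
    apply/seteqP; split => DB /= /eqP h; apply/eqP; move: h;
      rewrite blockB (detl (S := S)) // /G ?mulmxA; exact: id.
  move: hB; rewrite /etaB E; exact: gen_eta.
- set G := (X in sigma_max X) => hC.
  have E : [set DC : 'M[R[i]]_(n, r) | \det (S - block_mx (0 : 'M[R[i]]_(r, r))
      (0 : 'M[R[i]]_(r, n)) DC (0 : 'M[R[i]]_n)) = 0] =
      [set DC | \det (1%:M - G *m DC) = 0].
    apply/seteqP; split => DC /= /eqP h; apply/eqP; move: h;
      rewrite blockC (detl (S := S)) // /G ?mulmxA; exact: id.
  move: hC; rewrite /etaC E; exact: gen_eta.
move=> hP J1 J2 Lam M SS.
pose U := col_mx (0 : 'M[R[i]]_(r, n)) (1%:M : 'M[R[i]]_n).
pose V := row_mx (0 : 'M[R[i]]_(n, r)) (1%:M : 'M[R[i]]_n).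
have LamJ1 : Lam *m J1 = \mxrow_(j < d.+1) (lam ^+ j *: U).
  rewrite /Lam /J1 mul_mxrow_mxblock; apply: eq_mxrow => j.
  rewrite (bigD1 j) //= eqxx big1 ?addr0; first by rewrite -scalemxAl mul1mx.
  by move=> i /negPf ->; rewrite mulmx0.
have cond : forall DA : 'I_d.+1 -> 'M[R[i]]_n,
    (\det (S - block_mx (0 : 'M[R[i]]_(r, r)) (0 : 'M[R[i]]_(r, n)) (0 : 'M[R[i]]_(n, r))
        (\sum_(j < d.+1) lam ^+ j *: DA j)) == 0) =
    (\det (1%:M - \mxdiag_(i < d.+1) DA i *m M) == 0).
  move=> DA; rewrite det_sub_unit //.
  have -> : \mxdiag_(i < d.+1) DA i *m M =
     (\mxdiag_(i < d.+1) DA i *m J2) *m (invmx S *m Lam *m J1).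
    by rewrite /M !mulmxA.
  rewrite [in RHS]syl.
  have -> : invmx S *m Lam *m J1 *m (\mxdiag_(i < d.+1) DA i *m J2) =
    invmx S *m block_mx (0 : 'M[R[i]]_(r, r)) (0 : 'M[R[i]]_(r, n)) (0 : 'M[R[i]]_(n, r))
        (\sum_(j < d.+1) lam ^+ j *: DA j); last by [].
  rewrite -!mulmxA; congr (_ *m _).
  rewrite mulmxA LamJ1 /J2 mxdiag_mul_mxcol mul_mxrow_mxcol blockP.
  rewrite mulmx_sumr mulmx_suml; apply: eq_bigr => j _.
  by rewrite -scalemxAl -scalemxAr -scalemxAl !mulmxA.
pose Dset := [set Dl : 'M[R[i]]_(\sum_(i < d.+1) n) | SS Dl /\ \det (1%:M - Dl *m M) = 0].
have etaE : etaP d S lam = ereal_inf [set (specnorm Dl)%:E | Dl in Dset].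
  rewrite /etaP; congr ereal_inf.
  apply/seteqP; split => _ [x hx <-].
    exists (\mxdiag_(i < d.+1) x i); last by rewrite specnorm_mxdiag.
    split; first by exists x.
    by apply/eqP; rewrite -cond; apply/eqP.
  case: hx => [[Ds ->] hdet]; exists Ds; last by rewrite specnorm_mxdiag.
  by apply/eqP; rewrite cond; apply/eqP.
rewrite /mu_value /= -/Dset; case: asboolP => [h0|hn0].
  by exfalso; move: hP; rewrite etaE h0 image_set0 ereal_inf0 ltxx.
have ge0 : (0 <= ereal_inf [set (specnorm Dl)%:E | Dl in Dset])%E.
  by apply: le_ereal_inf_tmp => _ [Dl _ <-]; rewrite lee_fin sn_ge0.
rewrite invrK -etaE fineK // etaE ge0_fin_numE // -etaE //.
Qed.
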